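(* In the algebra $\mathcal O_q$ defined in the context, for all $n\in\mathbb N$: $$\mathcal W_{-n}=-(q-q^{-1})^{-1}\sum_{k=0}^n\sum_{\ell=0}^k\binom{k}{\ell}q^{2\ell-k}[2]_q^{-k-2}\tilde{\mathcal G}_{n-k}B_{(k-2\ell)\delta+\alpha_0},$$ $$\mathcal W_{n+1}=-(q-q^{-1})^{-1}\sum_{k=0}^n\sum_{\ell=0}^k\binom{k}{\ell}q^{k-2\ell}[2]_q^{-k-2}\tilde{\mathcal G}_{n-k}B_{(k-2\ell)\delta+\alpha_1}.$$
   Context: All algebras are associative and unital over a field $\mathbb F$; $q\in\mathbb F$ is nonzero and not a root of unity; $[n]_q=(q^n-q^{-n})/(q-q^{-1})$. For elements $X,Y$ of an algebra, $[X,Y]=XY-YX$ and $[X,Y]_q=qXY-q^{-1}YX$. Let $\rho=-(q^2-q^{-2})^2$. The algebra $\mathcal O_q$ is defined by generators $\mathcal W_{-k},\mathcal W_{k+1},\mathcal G_{k+1},\tilde{\mathcal G}_{k+1}$ ($k\in\mathbb N$) and the following relations for all $k,\ell\in\mathbb N$: $[\mathcal W_0,\mathcal W_{k+1}]=[\mathcal W_{-k},\mathcal W_1]=(\tilde{\mathcal G}_{k+1}-\mathcal G_{k+1})/(q+q^{-1})$; $[\mathcal W_0,\mathcal G_{k+1}]_q=[\tilde{\mathcal G}_{k+1},\mathcal W_0]_q=\rho\mathcal W_{-k-1}-\rho\mathcal W_{k+1}$; $[\mathcal G_{k+1},\mathcal W_1]_q=[\mathcal W_1,\tilde{\mathcal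 G}_{k+1}]_q=\rho\mathcal W_{k+2}-\rho\mathcal W_{-k}$; $[\mathcal W_{-k},\mathcal W_{-\ell}]=0$, $[\mathcal W_{k+1},\mathcal W_{\ell+1}]=0$; $[\mathcal W_{-k},\mathcal W_{\ell+1}]+[\mathcal W_{k+1},\mathcal W_{-\ell}]=0$; $[\mathcal W_{-k},\mathcal G_{\ell+1}]+[\mathcal G_{k+1},\mathcal W_{-\ell}]=0$; $[\mathcal W_{-k},\tilde{\mathcal G}_{\ell+1}]+[\tilde{\mathcal G}_{k+1},\mathcal W_{-\ell}]=0$; $[\mathcal W_{k+1},\mathcal G_{\ell+1}]+[\mathcal G_{k+1},\mathcal W_{\ell+1}]=0$; $[\mathcal W_{k+1},\tilde{\mathcal G}_{\ell+1}]+[\tilde{\mathcal G}_{k+1},\mathcal W_{\ell+1}]=0$; $[\mathcal G_{k+1},\mathcal G_{\ell+1}]=0$, $[\tilde{\mathcal G}_{k+1},\tilde{\mathcal G}_{\ell+1}]=0$; $[\tilde{\mathcal G}_{k+1},\mathcal G_{\ell+1}]+[\mathcal G_{k+1},\tilde{\mathcal G}_{\ell+1}]=0$. Convention: $\tilde{\mathcal G}_0=-(q-q^{-1})[2]_q^2$. Define $B_\delta=q^{-2}\mathcal W_1\mathcal W_0-\mathcal W_0\mathcal W_1$; $B_{\alpha_0}=\mathcal W_0$, $B_{\delta+\alpha_0}=\mathcal W_1+\frac{q[B_\delta,\mathcal W_0]}{(q-q^{-1})(q^2-q^{-2})}$, $B_{n\delta+\alpha_0}=B_{(n-2)\delta+\alpha_0}+\frac{q[B_\delta,B_{(n-1)\delta+\alpha_0}]}{(q-q^{-1})(q^2-q^{-2})}$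 for $n\ge2$; $B_{\alpha_1}=\mathcal W_1$, $B_{\delta+\alpha_1}=\mathcal W_0-\frac{q[B_\delta,\mathcal W_1]}{(q-q^{-1})(q^2-q^{-2})}$, $B_{n\delta+\alpha_1}=B_{(n-2)\delta+\alpha_1}-\frac{q[B_\delta,B_{(n-1)\delta+\alpha_1}]}{(q-q^{-1})(q^2-q^{-2})}$ for $n\ge2$. For negative integers $k$, set $B_{k\delta+\alpha_0}=B_{(-k-1)\delta+\alpha_1}$ and $B_{k\delta+\alpha_1}=B_{(-k-1)\delta+\alpha_0}$. *)

(* Defs.v *)
From HB Require Import structures.
From mathcomp Require Import all_boot all_order all_algebra.
Set Implicit Arguments. Unset Strict Implicit. Unset Printing Implicit Defensive.
Import Order.TTheory GRing.Theory Num.Theory.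
Local Open Scope ring_scope.

Section OqDefs.
Variables (F : fieldType) (A : algType F) (q : F).

Definition qint (n : nat) : F := (q ^+ n - q ^- n) / (q - q^-1).

Definition comm (X Y : A) : A := X * Y - Y * X.
Definition qcomm (X Y : A) : A := q *: (X * Y) - q^-1 *: (Y * X).

Definition rho : F := - (q ^+ 2 - q ^- 2) ^+ 2.

(* Encoding of the generators:
   Wm k = W_{-k},  Wp k = W_{k+1},  G k = G_{k+1},  Gt k = tilde G_{k+1}  (k : nat) *)
Definition Oq_relations (Wm Wp G Gt : nat -> A) : Prop :=
  (forall k, comm (Wm 0%N) (Wp k) = (q + q^-1)^-1 *: (Gt k - G k)
              /\ comm (Wm k) (Wp 0%N) = (q + q^-1)^-1 *: (Gt k - G k)) /\
      (forall k, qcomm (Wm 0%N) (G k) = rho *: (Wm k.+1 - Wp k)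
              /\ qcomm (Gt k) (Wm 0%N) = rho *: (Wm k.+1 - Wp k)) /\
      (forall k, qcomm (G k) (Wp 0%N) = rho *: (Wp k.+1 - Wm k)
              /\ qcomm (Wp 0%N) (Gt k) = rho *: (Wp k.+1 - Wm k)) /\
      (forall k l, comm (Wm k) (Wm l) = 0 /\ comm (Wp k) (Wp l) = 0) /\
      (forall k l, comm (Wm k) (Wp l) + comm (Wp k) (Wm l) = 0) /\
      (forall k l, [/\ comm (Wm k) (G l) + comm (G k) (Wm l) = 0,
                      comm (Wm k) (Gt l) + comm (Gt k) (Wm l) = 0,
                      comm (Wp k) (G l) + comm (G k) (Wp l) = 0 &
                      comm (Wp k) (Gt l) + comm (Gt k) (Wp l) = 0]) /\
      (forall k l, comm (G k) (G l) = 0 /\ comm (Gt k) (Gt l) = 0) /\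
      (forall k l, comm (Gt k) (G l) + comm (G k) (Gt l) = 0).

Definition Gtilde (Gt : nat -> A) (n : nat) : A :=
  match n with
  | 0%N => (- (q - q^-1) * qint 2 ^+ 2)%:A
  | m.+1 => Gt m
  end.

(* second-order recursion: s 0 = x0, s 1 = x1, s (n+2) = f (s n) (s (n+1)) *)
Fixpoint rec2 (x0 x1 : A) (f : A -> A -> A) (n : nat) : A * A :=
  match n with
  | 0%N => (x0, x1)
  | m.+1 => let p := rec2 x0 x1 f m in (p.2, f p.1 p.2)
  end.

Section PBW.
Variables (W0 W1 : A).
Definition Bdelta : A := q ^- 2 *: (W1 * W0) - W0 * W1.
Definition cB : F := q / ((q - q^-1) * (q ^+ 2 - q ^- 2)).

Definition Ba0 (n : nat) : A :=
  (rec2 W0 (W1 + cB *: comm Bdelta W0)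
        (fun x y => x + cB *: comm Bdelta y) n).1.
Definition Ba1 (n : nat) : A :=
  (rec2 W1 (W0 - cB *: comm Bdelta W1)
        (fun x y => x - cB *: comm Bdelta y) n).1.

(* integer-indexed versions, with B_{k delta+alpha_0} = B_{(-k-1)delta+alpha_1} for k<0 etc. *)
Definition B0 (m : int) : A :=
  match m with Posz n => Ba0 n | Negz n => Ba1 n end.
Definition B1 (m : int) : A :=
  match m with Posz n => Ba1 n | Negz n => Ba0 n end.
End PBW.
End OqDefs.

(* Main.v *)
Require Import Defs.
From HB Require Import structures.
From mathcomp Require Import all_boot all_order all_algebra.
From mathcomp Require Import ring zify.
Import Order.TTheory GRing.Theory Num.Theory.
Set Implicit Arguments. Unset Strict Implicit. Unset Printing Implicit Defensive.
Local Open Scope ring_scope.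

Section Basic.
Variables (F : fieldType) (A : algType F).
Implicit Types (x y z : A) (c : F).

Lemma commN x y : comm y x = - comm x y.
Proof. by rewrite /comm opprB. Qed.
Lemma commDl x y z : comm (x + y) z = comm x z + comm y z.
Proof. by rewrite /comm mulrDl mulrDr addrACA opprD. Qed.
Lemma commNl x y : comm (- x) y = - comm x y.
Proof. by rewrite /comm mulNr mulrN opprB opprK addrC. Qed.
Lemma commBl x y z : comm (x - y) z = comm x z - comm y z.
Proof. by rewrite commDl commNl. Qed.
Lemma commDr x y z : comm x (y + z) = comm x y + comm x z.
Proof. by rewrite /comm mulrDl mulrDr opprD addrACA. Qed.
Lemma commNr x y : comm x (- y) = - comm x y.
Proof. by rewrite /comm mulrN mulNr opprB opprK addrC. Qed.
Lemma commBr x y z : comm x (y - z) = comm x y - comm x z.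
Proof. by rewrite commDr commNr. Qed.
Lemma commZl c x y : comm (c *: x) y = c *: comm x y.
Proof. by rewrite /comm -scalerAl -scalerAr scalerBr. Qed.
Lemma commZr c x y : comm x (c *: y) = c *: comm x y.
Proof. by rewrite /comm -scalerAl -scalerAr scalerBr. Qed.
Lemma commMr x y z : comm x (y * z) = comm x y * z + y * comm x z.
Proof.
rewrite /comm mulrBl mulrBr !mulrA addrA; congr (_ - _).
by rewrite subrK.
Qed.
Lemma commMl x y z : comm (x * y) z = x * comm y z + comm x z * y.
Proof.
rewrite /comm mulrBl mulrBr !mulrA addrA; congr (_ - _).
by rewrite subrK.
Qed.
Lemma comm_sumr I (r : seq I) (P : pred I) (f : I -> A) x :
  comm x (\sum_(i <- r | P i) f i) = \sum_(i <- r | P i) comm x (f i).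
Proof. by rewrite /comm mulr_sumr mulr_suml -sumrB. Qed.
Lemma comm_alg c x : comm (c%:A) x = 0.
Proof. by rewrite /comm mulr_algl mulr_algr subrr. Qed.

Variable q : F.
Lemma qcommBr x y z : qcomm q x (y - z) = qcomm q x y - qcomm q x z.
Proof.
rewrite /qcomm ?mulrBr ?mulrBl !scalerBr !opprB addrACA [RHS]addrACA.
by congr (_ + _); rewrite addrC.
Qed.
Lemma qcommBl x y z : qcomm q (x - y) z = qcomm q x z - qcomm q y z.
Proof.
rewrite /qcomm ?mulrBr ?mulrBl !scalerBr !opprB addrACA [RHS]addrACA.
by congr (_ + _); rewrite addrC.
Qed.
Lemma qcommZr c x y : qcomm q x (c *: y) = c *: qcomm q x y.
Proof. by rewrite /qcomm scalerBr -scalerAr -scalerAl !scalerA mulrC [q^-1 * _]mulrC. Qed.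
Lemma qcommZl c x y : qcomm q (c *: x) y = c *: qcomm q x y.
Proof. by rewrite /qcomm scalerBr -scalerAr -scalerAl !scalerA mulrC [q^-1 * _]mulrC. Qed.
Lemma qcomm_sym x y : qcomm q x y - qcomm q y x = (q + q^-1) *: comm x y.
Proof.
rewrite /qcomm /comm scalerDl !scalerBr opprB.
rewrite addrAC -addrA [in RHS]addrAC -[in RHS]addrA; congr (_ + _).
by rewrite addrAC.
Qed.
End Basic.

Lemma pascal (V : zmodType) k (f : nat -> V) :
  \sum_(l < k.+2) f l *+ 'C(k.+1, l) =
  \sum_(l < k.+1) f l *+ 'C(k, l) + \sum_(l < k.+1) f l.+1 *+ 'C(k, l).
Proof.
have bump0 i : bump 0 i = i.+1 by rewrite /bump leq0n.
rewrite big_ord_recl [in X in _ = X + _]big_ord_recl /= !bin0.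
under eq_bigr do rewrite bump0 binS mulrnDr.
under [in X in _ = _ + X + _]eq_bigr do rewrite bump0.
rewrite big_split /= addrA; congr (_ + _).
rewrite big_ord_recr /= bin_small // mulr0n addr0.
by [].
Qed.

Section Comb.
Variables (F : fieldType) (A : algType F) (q : F) (W0 W1 : A).
Local Notation b := (B0 q W0 W1).
Local Notation Bd := (Bdelta q W0 W1).

Lemma bS (z : int) : b (z + 1) = b (z - 1) + cB q *: comm Bd (b z).
Proof.
case: z => [[|n]|n].
- have -> : (Posz 0 - 1 = Negz 0) by [].
  by rewrite add0r.
- have -> : (Posz n.+1 + 1 = Posz n.+2) by rewrite -PoszD addn1.
  have -> : (Posz n.+1 - 1 = Posz n) by rewrite -addn1 PoszD addrK.
  by [].
- have -> : (Negz n - 1 = Negz n.+1) by rewrite !NegzE -[n.+2]addn1 PoszD opprD.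
  case: n => [|n].
  + have -> : (Negz 0 + 1 = Posz 0) by [].
    by rewrite /= subrK.
  + have -> : (Negz n.+1 + 1 = Negz n) by rewrite !NegzE -addn1 PoszD opprD addrK.
    by rewrite /= subrK.
Qed.

Definition S (k : nat) (m : int) : A :=
  \sum_(l < k.+1) ('C(k, l)%:R * q ^ (2 * (l : nat)%:Z - (k : nat)%:Z)) *:
     b (m + (k : nat)%:Z - 2 * (l : nat)%:Z).

Lemma Sshift k m : S k (m + 1) = S k (m - 1) + cB q *: comm Bd (S k m).
Proof.
rewrite /S comm_sumr scaler_sumr -big_split; apply: eq_bigr => l _ /=.
have -> : m + 1 + (k : nat)%:Z - 2 * (l : nat)%:Z = (m + (k : nat)%:Z - 2 * (l : nat)%:Z) + 1 by lia.
have -> : m - 1 + (k : nat)%:Z - 2 * (l : nat)%:Z = (m + (k : nat)%:Z - 2 * (l : nat)%:Z) - 1 by lia.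
by rewrite bS scalerDr commZr !scalerA [cB q * _]mulrC.
Qed.

Hypothesis hq0 : q != 0.

Lemma Spascal k m : S k.+1 m = q^-1 *: S k (m + 1) + q *: S k (m - 1).
Proof.
pose f (l : nat) := q ^ (2 * l%:Z - (k.+1)%:Z) *: b (m + (k.+1)%:Z - 2 * l%:Z).
have -> : S k.+1 m = \sum_(l < k.+2) f l *+ 'C(k.+1, l).
  by apply: eq_bigr => l _; rewrite mulr_natl -scalerMnl.
rewrite pascal /S !scaler_sumr; congr (_ + _); apply: eq_bigr => l _.
- rewrite /f scalerMnl scalerA; congr (_ *: b _); last by lia.
  have -> : 2 * (l : nat)%:Z - (k.+1)%:Z = (2 * (l : nat)%:Z - (k : nat)%:Z) + (-1) by lia.
  rewrite expfzDr // exprN1 -mulr_natl; ring.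
- rewrite /f scalerMnl scalerA; congr (_ *: b _); last by lia.
  have -> : 2 * (l.+1)%:Z - (k.+1)%:Z = (2 * (l : nat)%:Z - (k : nat)%:Z) + 1 by lia.
  rewrite expfzDr // expr1z -mulr_natl; ring.
Qed.


End Comb.
Section Scal.
Variables (F : fieldType) (q : F).
Hypotheses (hq0 : q != 0) (H2 : q * q - 1 != 0) (H4 : (q * q) ^+ 2 - 1 != 0).
Ltac nz := rewrite ?oppr_eq0 ?expf_eq0 /= ?hq0 ?H2 ?H4.
Lemma hq1 : q - q^-1 != 0.
Proof.
apply/eqP => E; move/eqP: H2; apply.
have -> : q * q - 1 = q * (q - q^-1) by rewrite mulrBr mulfV.
by rewrite E mulr0.
Qed.
Lemma hK : q + q^-1 != 0.
Proof.
apply/eqP => E; move/eqP: H4; apply.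
have -> : (q * q) ^+ 2 - 1 = (q * q - 1) * (q * (q + q^-1)) by rewrite mulrDr mulfV // ; ring.
by rewrite E mulr0 mulr0.
Qed.
Lemma hK' : q * q + 1 != 0.
Proof.
apply/eqP => E; move/eqP: H4; apply.
have -> : (q * q) ^+ 2 - 1 = (q * q - 1) * (q * q + 1) by ring.
by rewrite E mulr0.
Qed.
Lemma qint2E : qint q 2 = q + q^-1.
Proof. by rewrite /qint; field; nz. Qed.
Lemma sc1 : q^-1 * cB q = - (rho q)^-1 * (q + q^-1).
Proof. by rewrite /cB /rho; field; nz. Qed.
Lemma sc2 : - (q * cB q) = q^+2 * (rho q)^-1 * (q + q^-1).
Proof. by rewrite /cB /rho; field; nz. Qed.
End Scal.

Section XY.
Variables (F : fieldType) (A : algType F) (q : F) (W0 W1 : A).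
Hypotheses (hq0 : q != 0) (H2 : q * q - 1 != 0) (H4 : (q * q) ^+ 2 - 1 != 0).
Local Notation b := (B0 q W0 W1).
Local Notation Bd := (Bdelta q W0 W1).
Local Notation S := (S q W0 W1).

Definition X (k : nat) : A := \sum_(l < k.+1)
  (('C(k, l)%:R * q ^ (2 * (l : nat)%:Z - (k : nat)%:Z) * qint q 2 ^- (k + 2))
     *: B0 q W0 W1 ((k : nat)%:Z - 2 * (l : nat)%:Z)).
Definition Y (k : nat) : A := \sum_(l < k.+1)
  (('C(k, l)%:R * q ^ ((k : nat)%:Z - 2 * (l : nat)%:Z) * qint q 2 ^- (k + 2))
     *: B1 q W0 W1 ((k : nat)%:Z - 2 * (l : nat)%:Z)).

Lemma B1E z : B1 q W0 W1 z = b (- z - 1).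
Proof.
case: z => n.
- by have -> : - Posz n - 1 = Negz n by rewrite NegzE -addn1 PoszD opprD.
- by have -> : - Negz n - 1 = Posz n by rewrite NegzE opprK -addn1 PoszD addrK.
Qed.

Lemma XS k : X k = (q + q^-1) ^- (k + 2) *: S k 0.
Proof.
rewrite /X /S scaler_sumr; apply: eq_bigr => l _.
by rewrite scalerA qint2E // mulrC add0r.
Qed.

Lemma YS k : Y k = (q + q^-1) ^- (k + 2) *: S k (-1).
Proof.
rewrite /Y /S scaler_sumr (reindex_inj rev_ord_inj); apply: eq_bigr => l _ /=.
have lk : (l <= k)%N by rewrite -ltnS.
rewrite subSS B1E scalerA qint2E // [_ * (_ ^- _)]mulrC bin_sub // -subzn //.
congr ((_ * (_ * q ^ _)) *: b _); lia.
Qed.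


Lemma KnE k : (q + q^-1) ^- (k.+1 + 2) = (q + q^-1)^-1 * (q + q^-1) ^- (k + 2).
Proof. by rewrite addSn exprS invfM. Qed.

Lemma Xsucc k : X k.+1 = Y k - (rho q)^-1 *: comm Bd (X k).
Proof.
rewrite [X k.+1]XS YS XS Spascal // Sshift [in RHS]commZr KnE.
have -> : (0 - 1 : int) = -1 by [].
set u := S k (-1); set w := comm Bd (S k 0); clearbody u w.
have hKn : (q + q^-1) ^+ (k + 2) != 0 by rewrite expf_neq0 // hK.
move: ((q + q^-1) ^+ (k + 2)) hKn => Kn hKn.
rewrite !scalerDr !scalerA addrAC -scalerDl -scaleNr.
congr (_ *: _ + _ *: _).
- by field; rewrite hKn hq0 hK'.
- by rewrite /cB /rho; field; rewrite ?oppr_eq0 ?expf_eq0 /= ?hq0 ?H2 ?H4 ?hK' ?hKn.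
Qed.

Lemma Ysucc k : Y k.+1 = X k + (q^+2 * (rho q)^-1) *: comm Bd (Y k).
Proof.
have E := Sshift q W0 W1 k (-1).
rewrite (_ : (-1 + 1 : int) = 0) // in E.
have E' : S k (-1 - 1) = S k 0 - cB q *: comm Bd (S k (-1)) by rewrite E addrK.
rewrite [Y k.+1]YS XS YS Spascal // E' [in RHS]commZr KnE.
have -> : (-1 + 1 : int) = 0 by [].
set u := S k 0; set w := comm Bd (S k (-1)); clearbody u w.
have hKn : (q + q^-1) ^+ (k + 2) != 0 by rewrite expf_neq0 // hK.
move: ((q + q^-1) ^+ (k + 2)) hKn => Kn hKn.
rewrite scalerBr addrA -scalerDl scalerDr scalerN !scalerA -scaleNr.
congr (_ *: _ + _ *: _).
- by field; rewrite hKn hq0 hK'.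
- by rewrite /cB /rho; field; rewrite ?oppr_eq0 ?expf_eq0 /= ?hq0 ?H2 ?H4 ?hK' ?hKn.
Qed.
End XY.

Section Alg.
Variables (F : fieldType) (A : algType F) (q : F).
Hypothesis hq0 : q != 0.
Lemma alg1 (a b P : A) :
  b * qcomm q a P + (- qcomm q P b) * a = q *: comm (b * a) P.
Proof.
rewrite /qcomm /comm mulrBr mulNr mulrBl opprB -!scalerAr -!scalerAl !mulrA subrKA.
by rewrite scalerBr.
Qed.
Lemma alg2 (a b P : A) :
  a * (- qcomm q P b) + qcomm q a P * b = q^-1 *: comm (a * b) P.
Proof.
rewrite /qcomm /comm mulrN mulrBr opprB mulrBl -!scalerAr -!scalerAl !mulrA subrKA.
by rewrite scalerBr.
Qed.
End Alg.

Section Main.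
Variables (F : fieldType) (q : F) (A : algType F) (Wm Wp G Gt : nat -> A).
Hypotheses (hq0 : q != 0) (H2 : q * q - 1 != 0) (H4 : (q * q) ^+ 2 - 1 != 0).
Hypothesis r1 : forall k, comm (Wm 0%N) (Wp k) = (q + q^-1)^-1 *: (Gt k - G k)
              /\ comm (Wm k) (Wp 0%N) = (q + q^-1)^-1 *: (Gt k - G k).
Hypothesis r2 : forall k, qcomm q (Wm 0%N) (G k) = rho q *: (Wm k.+1 - Wp k)
              /\ qcomm q (Gt k) (Wm 0%N) = rho q *: (Wm k.+1 - Wp k).
Hypothesis r3 : forall k, qcomm q (G k) (Wp 0%N) = rho q *: (Wp k.+1 - Wm k)
              /\ qcomm q (Wp 0%N) (Gt k) = rho q *: (Wp k.+1 - Wm k).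
Hypothesis r4 : forall k l, comm (Wm k) (Wm l) = 0 /\ comm (Wp k) (Wp l) = 0.
Hypothesis r7 : forall k l, comm (G k) (G l) = 0 /\ comm (Gt k) (Gt l) = 0.
Hypothesis r8 : forall k l, comm (Gt k) (G l) + comm (G k) (Gt l) = 0.

Local Notation a := (Wm 0%N).
Local Notation b := (Wp 0%N).
Local Notation Bd := (Bdelta q (Wm 0%N) (Wp 0%N)).
Local Notation K := (q + q^-1).
Local Notation P n := (comm (Wm 0%N) (Wp n)).

Let hK := hK hq0 H4.

Lemma GE n : G n = Gt n - K *: P n.
Proof.
rewrite (r1 n).1 scalerA mulfV // scale1r.
by rewrite opprB addrC subrK.
Qed.

Lemma La n : comm a (Gt n) = qcomm q a (P n).
Proof.
have E : qcomm q a (G n) = qcomm q (Gt n) a by rewrite (r2 n).1 (r2 n).2.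
rewrite GE qcommBr qcommZr in E.
apply: (scalerI hK); rewrite -qcomm_sym -E.
by rewrite opprB addrC subrK.
Qed.

Lemma Lb n : comm b (Gt n) = - qcomm q (P n) b.
Proof.
have E : qcomm q (G n) b = qcomm q b (Gt n) by rewrite (r3 n).1 (r3 n).2.
rewrite GE qcommBl qcommZl in E.
rewrite commN; congr (- _).
apply: (scalerI hK); rewrite -qcomm_sym -E.
by rewrite opprB addrC subrK.
Qed.

Lemma LBu n : q *: comm Bd (Wm n) = qcomm q a (P n).
Proof.
have h1 : comm a (Wm n) = 0 by rewrite (r4 0%N n).1.
have h2 : comm b (Wm n) = - P n by rewrite commN (r1 n).2 (r1 n).1.
rewrite /Bdelta commBl commZl !commMl h1 h2 mul0r mulr0 add0r addr0.
rewrite mulNr mulrN opprK scalerN scalerDr scalerN scalerA /qcomm addrC.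
congr (_ - _ *: _); rewrite expr2 invfM mulrA mulfV //; by rewrite mul1r.
Qed.

Lemma LBv n : q *: comm Bd (Wp n) = - qcomm q (P n) b.
Proof.
have h1 : comm b (Wp n) = 0 by rewrite (r4 0%N n).2.
rewrite /Bdelta commBl commZl !commMl h1 mul0r mulr0 add0r addr0.
rewrite scalerBr !scalerA /qcomm opprB.
congr (_ *: _ - _); rewrite expr2 invfM mulrA mulfV //; by rewrite mul1r.
Qed.

Lemma PP n : comm (comm b a) (P n) = 0.
Proof.
have E8 : comm (Gt 0%N) (G n) = - comm (G 0%N) (Gt n).
  by apply/eqP; rewrite -subr_eq0 opprK (r8 0%N n).
rewrite [comm b a]commN (r1 0%N).1 (r1 n).1 commNl commZl commZr !commBl !commBr.
rewrite E8 (r7 0%N n).1 (r7 0%N n).2.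
by rewrite sub0r opprK subr0 subrr !scaler0 oppr0.
Qed.

Lemma LA j : comm Bd (Gtilde q Gt j) = 0.
Proof.
case: j => [|n] /=.
  by rewrite /comm mulr_algl mulr_algr subrr.
have Ea : comm a (Gt n) = qcomm q a (P n) := La n.
have Eb : comm b (Gt n) = - qcomm q (P n) b := Lb n.
rewrite /Bdelta commBl commZl !commMl Ea Eb alg1 alg2 scalerA.
rewrite expr2 invfM -mulrA mulVf // mulr1 -scalerBr -commBl.
by rewrite -/(comm b a) PP scaler0.
Qed.

Lemma M1 n : rho q *: (Wm n.+1 - Wp n) = (q - q^-1) *: (Gt n * a) - comm Bd (Wm n).
Proof.
rewrite -(r2 n).2 /qcomm.
have E : a * Gt n = Gt n * a + q *: comm Bd (Wm n).
  by rewrite LBu -La /comm addrC subrK.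
rewrite E scalerDr scalerA mulVf // scale1r scalerBl opprD addrA.
done.
Qed.

Lemma M2 n : rho q *: (Wp n.+1 - Wm n) = (q - q^-1) *: (Gt n * b) + q^+2 *: comm Bd (Wp n).
Proof.
rewrite -(r3 n).2 /qcomm.
have E : b * Gt n = Gt n * b + q *: comm Bd (Wp n).
  by rewrite LBv -Lb /comm addrC subrK.
rewrite E scalerDr scalerA -expr2 scalerBl addrAC.
done.
Qed.
End Main.

Section Fin.
Variables (F : fieldType) (q : F) (A : algType F) (W0 W1 : A).
Hypotheses (hq0 : q != 0) (H2 : q * q - 1 != 0) (H4 : (q * q) ^+ 2 - 1 != 0).
Lemma X0E : X q W0 W1 0 = (q + q^-1) ^- 2 *: W0.
Proof. by rewrite XS // /S big_ord1 /= expr0z mul1r scale1r. Qed.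
Lemma Y0E : Y q W0 W1 0 = (q + q^-1) ^- 2 *: W1.
Proof. by rewrite YS // /S big_ord1 /= expr0z mul1r scale1r. Qed.
End Fin.

Lemma rho_neq0 (F : fieldType) (q : F) : q != 0 -> (q * q) ^+ 2 - 1 != 0 -> rho q != 0.
Proof.
move=> hq0 H4; rewrite /rho oppr_eq0 expf_eq0 /=.
apply/negP => /eqP E.
have E' : ((q * q) ^+ 2 - 1) / q ^+ 2 = 0 by rewrite -E; field.
move/eqP: E'; rewrite mulf_eq0 invr_eq0 expf_eq0 /= (negbTE hq0) orbF.
by rewrite (negbTE H4).
Qed.

Section Final.
Variables (F : fieldType) (q : F) (A : algType F) (Wm Wp G Gt : nat -> A).
Hypotheses (hq0 : q != 0) (H2 : q * q - 1 != 0) (H4 : (q * q) ^+ 2 - 1 != 0).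
Hypothesis r1 : forall k, comm (Wm 0%N) (Wp k) = (q + q^-1)^-1 *: (Gt k - G k)
              /\ comm (Wm k) (Wp 0%N) = (q + q^-1)^-1 *: (Gt k - G k).
Hypothesis r2 : forall k, qcomm q (Wm 0%N) (G k) = rho q *: (Wm k.+1 - Wp k)
              /\ qcomm q (Gt k) (Wm 0%N) = rho q *: (Wm k.+1 - Wp k).
Hypothesis r3 : forall k, qcomm q (G k) (Wp 0%N) = rho q *: (Wp k.+1 - Wm k)
              /\ qcomm q (Wp 0%N) (Gt k) = rho q *: (Wp k.+1 - Wm k).
Hypothesis r4 : forall k l, comm (Wm k) (Wm l) = 0 /\ comm (Wp k) (Wp l) = 0.
Hypothesis r7 : forall k l, comm (G k) (G l) = 0 /\ comm (Gt k) (Gt l) = 0.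
Hypothesis r8 : forall k l, comm (Gt k) (G l) + comm (G k) (Gt l) = 0.

Local Notation a := (Wm 0%N).
Local Notation b := (Wp 0%N).
Local Notation Bd := (Bdelta q (Wm 0%N) (Wp 0%N)).

Definition SX n := \sum_(k < n.+1) Gtilde q Gt (n - k) * X q a b k.
Definition SY n := \sum_(k < n.+1) Gtilde q Gt (n - k) * Y q a b k.

Lemma LA' j : comm Bd (Gtilde q Gt j) = 0.
Proof. exact: (LA hq0 H4 r1 r2 r3 r7 r8). Qed.

Lemma commG n (f : nat -> A) :
  comm Bd (\sum_(k < n.+1) Gtilde q Gt (n - k) * f k) =
  \sum_(k < n.+1) Gtilde q Gt (n - k) * comm Bd (f k).
Proof.
rewrite comm_sumr; apply: eq_bigr => i _.
by rewrite commMr LA' mul0r add0r.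
Qed.

Lemma SXS n : SX n.+1 = Gt n * ((q + q^-1) ^- 2 *: a) + SY n - (rho q)^-1 *: comm Bd (SX n).
Proof.
rewrite /SX /SY big_ord_recl subn0 X0E // commG.
under eq_bigr do rewrite lift0 subSS Xsucc // mulrBr -scalerAr.
by rewrite sumrB -scaler_sumr addrA.
Qed.

Lemma SYS n : SY n.+1 = Gt n * ((q + q^-1) ^- 2 *: b) + SX n + (q^+2 * (rho q)^-1) *: comm Bd (SY n).
Proof.
rewrite /SX /SY big_ord_recl subn0 Y0E // commG.
under eq_bigr do rewrite lift0 subSS Ysucc // mulrDr -scalerAr.
by rewrite big_split -scaler_sumr addrA.
Qed.

Lemma hrho : rho q != 0.
Proof. exact: rho_neq0. Qed.

Lemma mainL n : Wm n = - (q - q^-1)^-1 *: SX n /\ Wp n = - (q - q^-1)^-1 *: SY n.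
Proof.
have hq1 := hq1 hq0 H2.
have hK := hK hq0 H4.
have hK' := hK' H4.
elim: n => [|n [IH1 IH2]].
  rewrite /SX /SY !big_ord1 /= X0E // Y0E // !mulr_algl !scalerA qint2E //.
  split; (rewrite -[LHS]scale1r; congr (_ *: _); field; rewrite ?hq0 ?H2 ?hK' //).
split.
- have E : Wm n.+1 = Wp n + (rho q)^-1 *: ((q - q^-1) *: (Gt n * a) - comm Bd (Wm n)).
    by rewrite -(M1 hq0 H4 r1 r2 r4) scalerA mulVf ?hrho // scale1r addrC subrK.
  rewrite IH2 [in comm Bd _]IH1 in E.
  rewrite E SXS -scalerAr commZr.
  move: (SY n) (comm Bd (SX n)) (Gt n * a) => Y1 w g.
  rewrite !scalerBr !scalerDr !scalerA addrA [_ *: Y1 + _]addrC.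
  congr (_ *: _ + _ - _ *: _).
  + by rewrite /rho; field; rewrite ?hq0 ?H2 ?hK' ?oppr_eq0 ?expf_eq0 /= ?H4.
  + by rewrite /rho; field; rewrite ?hq0 ?H2 ?hK' ?oppr_eq0 ?expf_eq0 /= ?H4.
- have E : Wp n.+1 = Wm n + (rho q)^-1 *: ((q - q^-1) *: (Gt n * b) + q^+2 *: comm Bd (Wp n)).
    by rewrite -(M2 hq0 H4 r1 r3 r4) scalerA mulVf ?hrho // scale1r addrC subrK.
  rewrite IH1 [in comm Bd _]IH2 in E.
  rewrite E SYS -scalerAr commZr.
  move: (SX n) (comm Bd (SY n)) (Gt n * b) => X1 w g.
  rewrite !scalerDr !scalerA addrA [_ *: X1 + _]addrC.
  congr (_ *: _ + _ + _ *: _).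
  + by rewrite /rho; field; rewrite ?hq0 ?H2 ?hK' ?oppr_eq0 ?expf_eq0 /= ?H4.
  + by rewrite /rho; field; rewrite ?hq0 ?H2 ?hK' ?oppr_eq0 ?expf_eq0 /= ?H4.
Qed.
End Final.

Theorem proposition11p8 (F : fieldType) (q : F)
  (hq0 : q != 0) (hq : forall n : nat, (0 < n)%N -> q ^+ n != 1)
  (A : algType F) (Wm Wp G Gt : nat -> A)
  (hrel : Oq_relations q Wm Wp G Gt) (n : nat) :
  Wm n = - (q - q^-1)^-1 *:
    \sum_(k < n.+1) \sum_(l < k.+1)
      (('C(k, l)%:R * q ^ (2 * (l : nat)%:Z - (k : nat)%:Z) * qint q 2 ^- (k + 2))
        *: (Gtilde q Gt (n - k) * B0 q (Wm 0%N) (Wp 0%N) ((k : nat)%:Z - 2 * (l : nat)%:Z)))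
  /\
  Wp n = - (q - q^-1)^-1 *:
    \sum_(k < n.+1) \sum_(l < k.+1)
      (('C(k, l)%:R * q ^ ((k : nat)%:Z - 2 * (l : nat)%:Z) * qint q 2 ^- (k + 2))
        *: (Gtilde q Gt (n - k) * B1 q (Wm 0%N) (Wp 0%N) ((k : nat)%:Z - 2 * (l : nat)%:Z))).
Proof.
case: hrel => r1 [r2 [r3 [r4 [r5 [r6 [r7 r8]]]]]].
have H2 : q * q - 1 != 0.
  by rewrite subr_eq0 -expr2; apply: hq.
have H4 : (q * q) ^+ 2 - 1 != 0.
  by rewrite subr_eq0 -expr2 -exprM; apply: hq.
have [h1 h2] := mainL hq0 H2 H4 r1 r2 r3 r4 r7 r8 n.
split.
- rewrite {1}h1 /SX; congr (_ *: _); apply: eq_bigr => k _.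
  by rewrite /X mulr_sumr; apply: eq_bigr => l _; rewrite scalerAr.
- rewrite {1}h2 /SY; congr (_ *: _); apply: eq_bigr => k _.
  by rewrite /Y mulr_sumr; apply: eq_bigr => l _; rewrite scalerAr.
Qed.
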